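(* Let $T=(V,E)$ be a finite rooted binary tree, $\Pr$ a probability distribution over a finite set of queries, $u\in V$ a node with left child $\ell(u)$ and right child $r(u)$, and $R_u\subseteq T(u)$. Let $R_{r(u)}=T(r(u))\cap R_u$ and $R_{\ell(u)}=T(\ell(u))\cap R_u$. Then for every $v\in A(u)\cup\{\epsilon\}$: $$B_u(R_u\cup\{v\})=\begin{cases}B_u(\{u,v\})+B_{r(u)}(R_{r(u)}\cup\{u\})+B_{\ell(u)}(R_{\ell(u)}\cup\{u\}), & \text{if } u\in R_u,\\ B_{r(u)}(R_{r(u)}\cup\{v\})+B_{\ell(u)}(R_{\ell(u)}\cup\{v\}), & \text{otherwise.}\end{cases}$$
   Context: $T=(V,E)$ is a finite rooted tree in which every node has at most two children. $T(u)$ is the set of nodes of the subtree rooted at $u$ (including $u$); $A(u)$ is the set of proper ancestors of $u$. Each non-leaf node is associated with a variable of a finite set $X$; $\mathrm{vars}(u)$ is the set of variables associated with nodes of $T(u)$. Each query $q$ determines $Z_q\subseteq X$. For $R\subseteq V$, $w\in V$: $I_q(w,R)=1$ iff $w\in R$, $\mathrm{vars}(w)\subseteq Z_q$, and no $x\in A(w)\cap R$ has $\mathrm{vars}(x)\subseteq Z_q$; else $0$; $\mathbb{E}[I(w,R)]=\sum_q\Pr(q)I_q(w,R)$. Nodes have partial costs $c(x)$; total cost $C(w)=\sum_{x\in T(w)}c(x)$. Partial benefit: $B_u(R)=\sum_{w\in R\cap T(u)}\mathbb{E}[I(w,R)]C(w)$. $\epsilon$ is an auxiliary symbol not in $V$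 (meaning ''no ancestor selected''), and by convention $\epsilon$ is ignored in set arguments: $B_u(S\cup\{\epsilon\}):=B_u(S)$. *)

(* Defs.v *)
From mathcomp Require Import all_boot all_order all_algebra.
Set Implicit Arguments. Unset Strict Implicit. Unset Printing Implicit Defensive.
Import Order.TTheory GRing.Theory Num.Theory.
Local Open Scope ring_scope.

(* A finite rooted tree on the node type V is given by its parent map
   [par : V -> option V] ([par x = None] iff x is the root). *)

Section Tree.
Variables (V : finType) (par : V -> option V).

Definition par_rel : rel V := fun a b => par a == Some b.

Definition anc (x : V) : {set V} :=
  [set y | if par x is Some z then connect par_rel z y else false].

Definition subtree (u : V) : {set V} := [set w | (w == u) || (u \in anc w)].

Definition children (x : V) : {set V} := [set y | par y == Some x].

Definition is_leaf (x : V) : bool := children x == set0.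

Definition rooted_binary_tree : Prop :=
  [/\ exists! r, par r = None,
      forall x, x \notin anc x
    & forall x, #|children x| <= 2]%N.

Variables (X : finType) (var : V -> X).

(* vars(u): variables associated with the non-leaf nodes of T(u)
   (the value of [var] at leaves is irrelevant) *)
Definition vars (u : V) : {set X} :=
  [set var x | x in [set x in subtree u | ~~ is_leaf x]].

Variables (Q : finType) (Z : Q -> {set X}).

Definition Iq (q : Q) (w : V) (R : {set V}) : bool :=
  [&& w \in R, vars w \subset Z q &
      [forall x in R, (x \in anc w) ==> ~~ (vars x \subset Z q)]].

Variables (F : realFieldType) (Pr : Q -> F) (c : V -> F).

Definition is_prob : Prop := (forall q, 0 <= Pr q) /\ \sum_q Pr q = 1.

Definition EI (w : V) (R : {set V}) : F := \sum_q Pr q * (Iq q w R)%:R.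

Definition Ctot (w : V) : F := \sum_(x in subtree w) c x.

Definition Bu (u : V) (R : {set V}) : F :=
  \sum_(w in R :&: subtree u) EI w R * Ctot w.

End Tree.

(* S ∪ {v} for v ∈ V ∪ {ε}, with ε = None ignored *)
Definition addopt (V : finType) (S : {set V}) (v : option V) : {set V} :=
  if v is Some x then x |: S else S.

(* Main.v *)
Require Import Defs.
From mathcomp Require Import all_boot all_order all_algebra.
Import Order.TTheory GRing.Theory Num.Theory.
Set Implicit Arguments. Unset Strict Implicit.

Section TreeFacts.
Variables (V : finType) (par : V -> option V).
Hypothesis acyc : forall x, x \notin anc par x.
Local Notation anc := (anc par).
Local Notation T := (subtree par).
Local Notation e := (par_rel par).

Lemma anc_par x p : par x = Some p -> p \in anc x.
Proof. by move=> E; rewrite inE E connect0. Qed.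

Lemma connectE a b : connect e a b = (a == b) || (b \in anc a).
Proof.
apply/idP/idP.
- case/connectP => [[|z p]] /=; first by move=> _ ->; rewrite eqxx.
  move=> /andP[/eqP Haz Hp] Hl; apply/orP; right.
  rewrite inE Haz; apply/connectP; by exists p.
- case/orP => [/eqP->|]; first exact: connect0.
  rewrite inE; case E: (par a) => [z|] // H.
  apply: connect_trans _ H; apply: connect1; by rewrite /par_rel E.
Qed.

Lemma anc_trans a b c : b \in anc a -> c \in anc b -> c \in anc a.
Proof.
rewrite !inE; case: (par a) => [pa|] //; case Eb: (par b) => [pb|] // H1 H2.
apply: connect_trans H1 _; apply: connect_trans _ H2.
apply: connect1; by rewrite /par_rel Eb.
Qed.

Lemma anc_asym a b : b \in anc a -> a \in anc b -> False.
Proof. move=> H1 H2; by move: (acyc a); rewrite (anc_trans H1 H2). Qed.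

Lemma anc_parE x p y : par x = Some p -> (y \in anc x) = (y == p) || (y \in anc p).
Proof. by move=> E; rewrite inE E connectE eq_sym. Qed.

Lemma connect_total z a b : connect e z a -> connect e z b -> connect e a b || connect e b a.
Proof.
case/connectP => pth; elim: pth z => [|z1 pth IH] z /=.
  by move=> _ -> ->.
move=> /andP[/eqP Hz Hp] Hl Hzb.
rewrite connectE in Hzb; case/orP: Hzb => [/eqP <-|].
  apply/orP; right; apply/connectP; exists (z1 :: pth) => //=.
  by rewrite /par_rel Hz eqxx.
rewrite inE Hz => Hzb; exact: IH Hp Hl Hzb.
Qed.

Lemma inT w u : (w \in T u) = (w == u) || (u \in anc w).
Proof. by rewrite /subtree in_set. Qed.

Lemma T_trans x y z : x \in T y -> y \in T z -> x \in T z.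
Proof.
rewrite !inT => /orP[/eqP->//|H1] /orP[/eqP<-|H2]; first by rewrite H1 orbT.
by rewrite (anc_trans H1 H2) orbT.
Qed.

Lemma self_T x : x \in T x.
Proof. by rewrite inT eqxx. Qed.

Lemma anc_T x w : x \in anc w -> w \in T x.
Proof. by rewrite inT => ->; rewrite orbT. Qed.

Lemma T_connect w x : (w \in T x) = connect e w x.
Proof. by rewrite connectE inT eq_sym. Qed.

Lemma T_not_anc x u : x \in T u -> x \notin anc u.
Proof.
rewrite inT => /orP[/eqP->|H]; first exact: acyc.
apply/negP => H2; exact: anc_asym H H2.
Qed.

Lemma connect_child z u : connect e z u -> z = u \/ exists c, par c = Some u /\ connect e z c.
Proof.
case/connectP => pth; elim: pth z => [|z1 pth IH] z /=; first by move=> _ ->; left.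
move=> /andP[/eqP Hz Hp] Hl; right.
case: (IH z1 Hp Hl) => [Ez1|[c [Hc Hz1c]]].
  by exists z; split; [rewrite Hz Ez1|exact: connect0].
exists c; split => //; apply: connect_trans Hz1c; apply: connect1; by rewrite /par_rel Hz.
Qed.

Lemma T_child u w : w \in T u -> w != u -> exists c, par c = Some u /\ w \in T c.
Proof.
rewrite inT => /orP[->//|]; rewrite inE; case E: (par w) => [z|] // H _.
case: (connect_child H) => [Ez|[c [Hc Hzc]]].
  by exists w; rewrite -Ez; split => //; exact: self_T.
exists c; split => //; rewrite T_connect; apply: connect_trans Hzc.
apply: connect1; by rewrite /par_rel E.
Qed.

Lemma sib_not_anc a b u : par a = Some u -> par b = Some u -> b \notin anc a.
Proof.
move=> Ha Hb; apply/negP; rewrite (anc_parE _ Ha) => /orP[/eqP Ebu|H].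
  by move: (acyc u); rewrite -{2}Ebu (anc_par Hb).
exact: anc_asym H (anc_par Hb).
Qed.

Lemma T_disj a b u w : par a = Some u -> par b = Some u -> a != b ->
  w \in T a -> w \in T b -> False.
Proof.
move=> Ha Hb Hab; rewrite !T_connect => H1 H2.
case/orP: (connect_total H1 H2); rewrite connectE => /orP[/eqP E|H].
- by rewrite E eqxx in Hab.
- by move: H; rewrite (negbTE (sib_not_anc Ha Hb)).
- by rewrite E eqxx in Hab.
- by move: H; rewrite (negbTE (sib_not_anc Hb Ha)).
Qed.

Lemma anc_not_T x u : x \in anc u -> x \notin T u.
Proof.
move=> H; apply/negP; rewrite inT => /orP[/eqP E|H2].
  by move: (acyc u); rewrite -{1}E H.
exact: anc_asym H H2.
Qed.

Lemma T_sub x u : x \in anc u -> T u \subset T x.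
Proof. move=> H; apply/subsetP => y Hy; apply: T_trans Hy (anc_T H). Qed.

End TreeFacts.
Local Open Scope ring_scope.
Lemma in_addopt (V : finType) (S : {set V}) v y :
  (y \in addopt S v) = (y \in S) || (if v is Some x then y == x else false).
Proof. by case: v => [x|] /=; rewrite ?orbF // in_setU1 orbC. Qed.

Lemma sumU (V : finType) (F : nmodType) (A B : {set V}) (f : V -> F) :
  [disjoint A & B] -> \sum_(i in A :|: B) f i = \sum_(i in A) f i + \sum_(i in B) f i.
Proof. move=> H; rewrite -bigU //; apply: eq_bigl => i; by rewrite in_setU. Qed.

Section Main.
Variables (V : finType) (par : V -> option V) (X : finType) (var : V -> X)
  (Q : finType) (Z : Q -> {set X}) (F : realFieldType) (Pr : Q -> F) (c : V -> F).
Local Notation T := (subtree par).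
Local Notation anc := (anc par).

Lemma Iq_eq q w (R1 R2 : {set V}) :
  (w \in R1) = (w \in R2) ->
  (forall x, x \in R1 -> x \in anc w -> vars par var x \subset Z q ->
     exists2 y, y \in R2 & (y \in anc w) && (vars par var y \subset Z q)) ->
  (forall x, x \in R2 -> x \in anc w -> vars par var x \subset Z q ->
     exists2 y, y \in R1 & (y \in anc w) && (vars par var y \subset Z q)) ->
  Iq par var Z q w R1 = Iq par var Z q w R2.
Proof.
move=> Hw H12 H21; rewrite /Iq Hw; congr (_ && (_ && _)).
apply/idP/idP => H; apply/forallP => x; apply/implyP => xR; apply/implyP => xa;
  apply/negP => Sx.
- case: (H21 x xR xa Sx) => y yR /andP[ya Sy].
  by move: (forallP H y); rewrite yR ya Sy.
- case: (H12 x xR xa Sx) => y yR /andP[ya Sy].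
  by move: (forallP H y); rewrite yR ya Sy.
Qed.

Lemma EI_eq w (R1 R2 : {set V}) : (forall q, Iq par var Z q w R1 = Iq par var Z q w R2) ->
  EI par var Z Pr w R1 = EI par var Z Pr w R2.
Proof. move=> H; apply: eq_bigr => q _; by rewrite H. Qed.

Lemma vars_mono x u : T u \subset T x -> vars par var u \subset vars par var x.
Proof.
move=> H; apply: imsetS; apply/subsetP => y /setIdP[H1 H2].
by apply/setIdP; split => //; exact: (subsetP H).
Qed.

Lemma addopt_T S v w : (forall x, v = Some x -> x \notin T w) ->
  addopt S v :&: T w = S :&: T w.
Proof.
move=> Hv; apply/setP => y; rewrite !in_setI in_addopt.
case: v Hv => [x Hx|] /=; last by rewrite orbF.
have {}Hx := Hx x erefl.
case: (eqVneq y x) => [->|]; last by rewrite orbF.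
by rewrite (negbTE Hx) !andbF.
Qed.

End Main.
Unset Implicit Arguments. Set Strict Implicit.
Theorem lemma4 (V : finType) (par : V -> option V) (X : finType) (var : V -> X)
  (Q : finType) (Z : Q -> {set X}) (F : realFieldType) (Pr : Q -> F) (c : V -> F)
  (u lu ru : V) (Ru : {set V}) (v : option V) :
  rooted_binary_tree par ->
  is_prob Pr ->
  par lu = Some u -> par ru = Some u -> lu != ru ->
  Ru \subset subtree par u ->
  (if v is Some x then x \in anc par u else true) ->
  let Rr := subtree par ru :&: Ru in
  let Rl := subtree par lu :&: Ru in
  let B := Bu par var Z Pr c in
  B u (addopt Ru v) =
    (if u \in Ru then
       B u (addopt [set u] v) + B ru (Rr :|: [set u]) + B lu (Rl :|: [set u])
     else
       B ru (addopt Rr v) + B lu (addopt Rl v)).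
Proof.
move=> [_ acyc deg] _ Hl Hr Hlr HRu Hv Rr Rl B.
have Hch : forall d, par d = Some u -> d = ru \/ d = lu.
  move=> d Hd; case: (eqVneq d lu) => [->|Hdl]; [by right|].
  case: (eqVneq d ru) => [->|Hdr]; [by left|]; exfalso.
  have : (#|d |: [set lu; ru]| <= #|children par u|)%N.
    apply: subset_leq_card; apply/subsetP => y; rewrite !in_setU1 in_set1.
    by case/or3P => /eqP->; rewrite in_set ?Hd ?Hl ?Hr.
  rewrite cardsU1 cards2 in_setU1 in_set1 (negbTE Hdl) (negbTE Hdr) Hlr /= => H.
  by move: (leq_trans H (deg u)).
pose T := subtree par.
have uTa : forall a, par a = Some u -> u \notin T a.
  move=> a Ha; apply/negP => H; move: (T_not_anc acyc H).
  by rewrite (anc_par Ha).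
have aTu : forall a w, par a = Some u -> w \in T a -> w \in T u.
  move=> a w Ha H; apply: T_trans H _; exact: anc_T (anc_par Ha).
have uanc : forall a w, par a = Some u -> w \in T a -> u \in anc par w.
  move=> a w Ha; rewrite inT => /orP[/eqP->|H]; first exact: anc_par.
  exact: anc_trans H (anc_par Ha).
have vT : forall a, par a = Some u -> forall x, v = Some x -> x \notin T a.
  move=> a Ha x E; move: Hv; rewrite E => Hx; apply/negP => H.
  by move: (anc_not_T acyc Hx); rewrite (aTu a x Ha H).
have vTu : forall x, v = Some x -> x \notin T u.
  by move=> x E; move: Hv; rewrite E => Hx; exact: anc_not_T.
have ancRu : forall a w x, par a = Some u -> w \in T a -> x \in Ru -> x \in anc par w ->
    (x == u) || (x \in T a :&: Ru).
  move=> a w x Ha Hw xR xa; case: (eqVneq x u) => //= xu.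
  case: (T_child (subsetP HRu x xR) xu) => d [Hd xd].
  rewrite in_setI xR andbT.
  have wd : w \in T d by apply: T_trans (anc_T xa) xd.
  case: (eqVneq d a) => [<- //|da].
  by exfalso; apply: (T_disj acyc Hd Ha da wd Hw).
have setRu : Ru = (if u \in Ru then [set u] else set0) :|: (Rr :|: Rl).
  apply/setP => y; rewrite in_setU in_setU !in_setI.
  case Hy: (y \in Ru); rewrite ?andbT ?andbF /=.
  - case: (eqVneq y u) => [Eyu|yu]; first by subst y; rewrite Hy in_set1 eqxx.
    case: (T_child (subsetP HRu y Hy) yu) => d [Hd yd].
    by case: (Hch d Hd) => Ed; subst d; rewrite yd !orbT.
  - case Hu: (u \in Ru); rewrite ?in_set0 //.
    by rewrite in_set1 ?orbF; case: eqP => // E; rewrite E Hu in Hy.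
have disj : [disjoint Rr & Rl].
  rewrite -setI_eq0; apply/eqP/setP => y; rewrite in_set0 !in_setI.
  apply/negbTE/negP => /andP[/andP[H1 _] /andP[H2 _]].
  exact: (T_disj acyc Hl Hr Hlr H2 H1).
have uRrl : u \notin Rr :|: Rl.
  by rewrite in_setU !in_setI (negbTE (uTa _ Hl)) (negbTE (uTa _ Hr)).
have RrT : forall a, par a = Some u -> (T a :&: Ru) :&: T a = T a :&: Ru.
  by move=> a Ha; rewrite setIC setIA setIid.
have L1 : addopt Ru v :&: subtree par u = Ru.
  rewrite (addopt_T _ vTu); exact/setIidPl.
have EIu : u \in Ru -> EI par var Z Pr u (addopt Ru v) = EI par var Z Pr u (addopt [set u] v).
  move=> Hu; apply: EI_eq => q; apply: Iq_eq.
  - by rewrite !in_addopt Hu in_set1 eqxx.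
  - move=> x; rewrite !in_addopt => /orP[xR|xv] xa Sx.
      by move: (T_not_anc acyc (subsetP HRu x xR)); rewrite xa.
    by exists x; rewrite ?in_addopt ?xv ?orbT ?xa ?Sx.
  - move=> x; rewrite !in_addopt in_set1 => /orP[/eqP->|xv] xa Sx.
      by move: (acyc u); rewrite xa.
    by exists x; rewrite ?in_addopt ?xv ?orbT ?xa ?Sx.
have EIa : forall a w, par a = Some u -> w \in T a :&: Ru -> u \in Ru ->
    EI par var Z Pr w (addopt Ru v) = EI par var Z Pr w ((T a :&: Ru) :|: [set u]).
  move=> a w Ha /setIP[wa wR] Hu; apply: EI_eq => q; apply: Iq_eq.
  - by rewrite in_addopt in_setU in_set1 in_setI wa wR.
  - move=> x; rewrite in_addopt => /orP[xR|xv] xa Sx.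
      exists x; last by rewrite xa Sx.
      by rewrite in_setU in_set1; case/orP: (ancRu a w x Ha wa xR xa) => ->; rewrite ?orbT.
    exists u; first by rewrite in_setU in_set1 eqxx orbT.
    rewrite (uanc a w Ha wa) /=.
    case E: v xv Hv => [x0|] // /eqP Ex Hx0; subst x0.
    apply: subset_trans _ Sx; apply: vars_mono; exact: T_sub Hx0.
  - move=> x; rewrite in_setU in_setI in_set1 => /orP[/andP[_ xR]|/eqP->] xa Sx.
      by exists x; rewrite ?in_addopt ?xR ?xa ?Sx.
    by exists u; rewrite ?in_addopt ?Hu ?xa ?Sx.
have EIb : forall a w, par a = Some u -> w \in T a :&: Ru -> u \notin Ru ->
    EI par var Z Pr w (addopt Ru v) = EI par var Z Pr w (addopt (T a :&: Ru) v).
  move=> a w Ha /setIP[wa wR] Hu; apply: EI_eq => q; apply: Iq_eq.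
  - by rewrite !in_addopt in_setI wa wR.
  - move=> x; rewrite in_addopt => /orP[xR|xv] xa Sx; exists x; rewrite ?xa ?Sx // in_addopt.
      case/orP: (ancRu a w x Ha wa xR xa) => [/eqP Exu|->//].
      by rewrite -Exu xR in Hu.
    by rewrite xv orbT.
  - move=> x; rewrite in_addopt in_setI => /orP[/andP[_ xR]|xv] xa Sx;
      by exists x; rewrite ?xa ?Sx // in_addopt ?xR ?xv ?orbT.
rewrite /B /Bu L1 {1}setRu; case Hu: (u \in Ru).
- have L2 : addopt [set u] v :&: subtree par u = [set u].
    by rewrite (addopt_T _ vTu); apply/setIidPl; rewrite sub1set; exact: self_T.
  have L3 : forall a, par a = Some u -> ((T a :&: Ru) :|: [set u]) :&: subtree par a = T a :&: Ru.
    move=> a Ha; rewrite setIUl RrT //.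
    have -> : [set u] :&: subtree par a = set0.
      apply/setP => y; rewrite in_setI in_set1 in_set0.
      by case: eqP => // ->; rewrite (negbTE (uTa a Ha)).
    by rewrite setU0.
  rewrite L2 big_set1 (L3 _ Hr) (L3 _ Hl) big_setU1 // sumU // EIu //.
  rewrite -addrA; congr (_ + (_ + _)); apply: eq_bigr => w Hw; by rewrite (EIa _ w _ Hw).
- rewrite set0U sumU // (addopt_T _ (vT _ Hr)) (addopt_T _ (vT _ Hl)) !RrT //.
  have Hu' : u \notin Ru by rewrite Hu.
  congr (_ + _); apply: eq_bigr => w Hw; by rewrite (EIb _ w _ Hw).
Qed.
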